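(* Affine rigidity in $\mathbb{R}^d$ is a generic property of hypergraphs: for every hypergraph $\Theta$, either every generic framework $(p,\Theta)$ with $p:V(\Theta)\to\mathbb{R}^d$ is affinely rigid in $\mathbb{R}^d$, or no generic such framework is affinely rigid in $\mathbb{R}^d$.
   Context: A hypergraph $\Theta$ has a finite vertex set $V$ and hyperedges that are subsets of $V$; a framework $(p,\Theta)$ pairs it with a configuration $p:V\to\mathbb{R}^d$. A configuration is generic if its coordinates satisfy no nonzero polynomial equation with rational coefficients. Frameworks $(p,\Theta),(q,\Theta)$ in $\mathbb{R}^d$ are affinely equivalent if for each hyperedge $h$ there is an invertible affine map $g_h$ of $\mathbb{R}^d$ with $g_h(p(u))=q(u)$ for $u\in h$, and affinely congruent if a single invertible affine map $g$ satisfies $g(p(u))=q(u)$ for all $u\in V$. $(p,\Theta)$ is affinely rigid in $\mathbb{R}^d$ if every framework in $\mathbb{R}^d$ affinely equivalent to it is affinely congruent to it. *)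

(* Defs.v *)
From HB Require Import structures.
From mathcomp Require Import all_boot all_order all_algebra.
From mathcomp Require Import reals.
From mathcomp Require Import mpoly.
Set Implicit Arguments. Unset Strict Implicit. Unset Printing Implicit Defensive.
Import Order.TTheory GRing.Theory Num.Theory.
Local Open Scope ring_scope.

Definition hypergraph (V : finType) := {set {set V}}.

Definition config (R : realType) (d : nat) (V : finType) := V -> 'rV[R]_d.

Definition ncoord (V : finType) (d : nat) := #|{: V * 'I_d}|.

Definition coords (R : realType) (d : nat) (V : finType) (p : config R d V)
  : 'I_(ncoord V d) -> R :=
  fun i => let: (u, k) := enum_val i in p u 0 k.

Definition generic (R : realType) (d : nat) (V : finType) (p : config R d V) :=
  forall P : {mpoly rat[ncoord V d]}, P != 0 ->
    (map_mpoly (ratr : rat -> R) P).@[coords p] != 0.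

Definition inv_affine (R : realType) (d : nat) (g : 'rV[R]_d -> 'rV[R]_d) :=
  exists (A : 'M[R]_d) (b : 'rV[R]_d),
    A \in unitmx /\ forall x, g x = x *m A + b.

Definition affinely_equivalent (R : realType) (d : nat) (V : finType)
  (Th : hypergraph V) (p q : config R d V) :=
  forall h, h \in Th -> exists g, inv_affine g /\ forall u, u \in h -> g (p u) = q u.

Definition affinely_congruent (R : realType) (d : nat) (V : finType)
  (p q : config R d V) :=
  exists g, inv_affine g /\ forall u, g (p u) = q u.

Definition affinely_rigid (R : realType) (d : nat) (V : finType)
  (Th : hypergraph V) (p : config R d V) :=
  forall q : config R d V, affinely_equivalent Th p q -> affinely_congruent p q.

(* Main.v *)
From Stdlib Require Import FunctionalExtensionality Classical.
Require Import Defs.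
From HB Require Import structures.
From mathcomp Require Import all_boot all_order all_algebra.
From mathcomp Require Import reals.
From mathcomp Require Import mpoly.
From mathcomp Require Import fraction ring.
Set Implicit Arguments. Unset Strict Implicit. Unset Printing Implicit Defensive.
Import Order.TTheory GRing.Theory Num.Theory.
Local Open Scope ring_scope.
Local Open Scope quotient_scope.
Section Lift.
Variables (R : idomainType) (K : fieldType) (f : {rmorphism R -> K}).
Hypothesis finj : injective f.

Definition ffrac (z : {fraction R}) : K :=
  let r := repr z in f \n_r / f \d_r.

Lemma fnz (x : R) : x != 0 -> f x != 0.
Proof. by move=> nx; apply: contra nx => /eqP; rewrite -(rmorph0 f) => /finj ->. Qed.

Lemma ffrac_pi (r : {ratio R}) : ffrac (\pi_({fraction R}) r) = f \n_r / f \d_r.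
Proof.
rewrite /ffrac; have := FracField.equivf_r r.
set s := repr _ => e.
have hr := fnz (denom_ratioP r); have hs := fnz (denom_ratioP s).
apply/eqP; rewrite eqr_div // -!rmorphM; apply/eqP; congr (f _).
by rewrite mulrC -e mulrC.
Qed.

Lemma ffrac_tofrac x : ffrac (tofrac x) = f x.
Proof.
rewrite /tofrac; unlock; rewrite ffrac_pi !numden_Ratio ?oner_neq0 //.
by rewrite rmorph1 divr1.
Qed.

Lemma ffrac_add : zmod_morphism ffrac.
Proof.
move=> z w.
rewrite -[z]reprK -[w]reprK.
set a := repr z; set b := repr w.
have ->: \pi_({fraction R}) a - \pi_({fraction R}) b
   = \pi_({fraction R}) (FracField.addf a (FracField.oppf b)).
  by rewrite FracField.pi_add FracField.pi_opp.
rewrite !ffrac_pi /FracField.addf /FracField.oppf /=.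
have ha := denom_ratioP a; have hb := denom_ratioP b.
rewrite !numden_Ratio ?mulf_neq0 //.
have fa := fnz ha; have fb := fnz hb.
rewrite rmorphD !rmorphM rmorphN.
by field; apply/andP.
Qed.

Lemma ffrac_mul : monoid_morphism ffrac.
Proof.
split.
  have ->: (1 : {fraction R}) = tofrac 1 by [].
  by rewrite ffrac_tofrac rmorph1.
move=> z w.
rewrite -[z]reprK -[w]reprK.
set a := repr z; set b := repr w.
have ->: \pi_({fraction R}) a * \pi_({fraction R}) b
   = \pi_({fraction R}) (FracField.mulf a b).
  by rewrite FracField.pi_mul.
rewrite !ffrac_pi /FracField.mulf /=.
have ha := denom_ratioP a; have hb := denom_ratioP b.
rewrite !numden_Ratio ?mulf_neq0 //.
have fa := fnz ha; have fb := fnz hb.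
rewrite !rmorphM.
by field; apply/andP.
Qed.

Definition ffracRM : {rmorphism {fraction R} -> K} :=
  HB.pack ffrac (GRing.isZmodMorphism.Build _ _ ffrac ffrac_add)
    (GRing.isMonoidMorphism.Build _ _ ffrac ffrac_mul).
Lemma ffracRM_tofrac x : ffracRM (tofrac x) = f x.
Proof. exact: ffrac_tofrac. Qed.
End Lift.
Local Close Scope quotient_scope.
Section Ev.
Variables (R : realType) (d : nat) (V : finType).
Definition evp (p : config R d V) : {rmorphism {mpoly rat[ncoord V d]} -> R} :=
  meval (coords p) \o map_mpoly (ratr : rat -> R).
Definition vidx (u : V) (k : 'I_d) : 'I_(ncoord V d) := enum_rank (u, k).
Lemma evpX p u k : evp p 'X_(vidx u k) = p u 0 k.
Proof. by rewrite /evp /= map_mpolyX mevalXU /coords /vidx enum_rankK. Qed.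
Lemma evp_inj p : generic p -> injective (evp p).
Proof.
move=> gp P Q e; apply/eqP; rewrite -subr_eq0; apply/negPn/negP => nz.
have := gp _ nz; have ->: (map_mpoly ratr (P - Q)).@[coords p] = evp p (P - Q) by []. by rewrite rmorphB e subrr eqxx.
Qed.
End Ev.
Section Mx.
Variables (d : nat) (V : finType) (Th : hypergraph V).

Definition PT (K : fieldType) (x : V -> 'I_d -> K) : 'M[K]_(1 + d, #|V|) :=
  col_mx (const_mx 1) (\matrix_(k, i) x (enum_val i) k).
Definition Dg (K : fieldType) (h : {set V}) : 'M[K]_#|V| :=
  diag_mx (\row_i ((enum_val i \in h)%:R)).
Definition Kh (K : fieldType) (x : V -> 'I_d -> K) h :=
  col_mx (PT x) (1%:M - Dg K h).
Definition LAm (K : fieldType) (x : V -> 'I_d -> K) :=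
  (\bigcap_(h in Th) <<Kh x h>> <= PT x)%MS.
Definition Dm (K : fieldType) (x : V -> 'I_d -> K) (S : {set V})
  : 'M[K]_(#|{: V * V}|, d) :=
  \matrix_(i, k) let: (u, v) := enum_val i in
     if (u \in S) && (v \in S) then x u k - x v k else 0.
Definition Cm (K : fieldType) (x : V -> 'I_d -> K) :=
  (Dm x setT == 0) || [exists h in Th, (Dm x setT <= Dm x h)%MS].
Definition Psi (K : fieldType) (x : V -> 'I_d -> K) := LAm x && Cm x.

Section Transfer.
Variables (K K' : fieldType) (f : {rmorphism K -> K'}) (x : V -> 'I_d -> K).
Let y u k := f (x u k).

Lemma PT_map : PT y = map_mx f (PT x).
Proof.
rewrite /PT map_col_mx; congr col_mx; apply/matrixP => i j; rewrite !mxE //.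
by rewrite (rmorph1 f).
Qed.
Lemma Dg_map h : Dg K' h = map_mx f (Dg K h).
Proof.
apply/matrixP => i j; rewrite !mxE; case: (i == j) => //=; last by rewrite rmorph0.
by rewrite rmorphMn rmorph_nat.
Qed.
Lemma Kh_map h : Kh y h = map_mx f (Kh x h).
Proof. by rewrite /Kh map_col_mx PT_map Dg_map map_mxB map_mx1. Qed.
Lemma Dm_map S : Dm y S = map_mx f (Dm x S).
Proof.
apply/matrixP => i j; rewrite !mxE; case: (enum_val i) => u v.
by case: ifP; rewrite ?rmorphB ?rmorph0.
Qed.

Lemma bigcap_map : (map_mx f (\bigcap_(h in Th) <<Kh x h>>) :=:
                    \bigcap_(h in Th) <<Kh y h>>)%MS.
Proof.
apply/eqmxP.
pose P (a : 'M[K]_#|V|) (b : 'M[K']_#|V|) := (map_mx f a == b)%MS.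
apply: (big_ind2 P).
- by rewrite /P map_mx1; apply/eqmxP.
- move=> a1 b1 a2 b2 /eqmxP e1 /eqmxP e2; rewrite /P; apply/eqmxP.
  by apply: eqmx_trans (map_capmx _ _ _) _; apply: cap_eqmx.
- by move=> h _; rewrite /P Kh_map; apply/eqmxP; apply: map_genmx.
Qed.

Lemma Psi_map : Psi y = Psi x.
Proof.
rewrite /Psi /LAm /Cm -bigcap_map PT_map map_submx Dm_map map_mx_eq0.
congr (_ && (_ || _)); apply: eq_existsb => h.
by rewrite !Dm_map map_submx.
Qed.
End Transfer.
End Mx.

Section Inv.
Variables (R : realType) (d : nat) (V : finType) (Th : hypergraph V).
Definition xp (p : config R d V) : V -> 'I_d -> R := fun u k => p u 0 k.
Definition Xf : V -> 'I_d -> {fraction {mpoly rat[ncoord V d]}} :=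
  fun u k => tofrac 'X_(vidx u k).
Lemma Psi_generic (p : config R d V) : generic p -> Psi Th (xp p) = Psi Th Xf.
Proof.
move=> gp; rewrite -(Psi_map Th (ffracRM (evp_inj gp)) Xf).
congr (Psi Th _); apply: functional_extensionality => u; apply: functional_extensionality => k.
by rewrite /Xf ffracRM_tofrac evpX.
Qed.
End Inv.

Lemma nat_avoid (T : eqType) (Ps : seq T) (bad : T -> nat -> bool) :
  (forall P, P \in Ps -> forall a b, bad P a -> bad P b -> a = b) ->
  exists N, forall P, P \in Ps -> forall t, bad P t -> (t < N)%N.
Proof.
elim: Ps => [|P Ps IH] H; first by exists 0%N.
have [|N HN] := IH; first by move=> Q HQ; apply: H; rewrite inE HQ orbT.
have HP := H P (mem_head _ _).
have [[a Pa]|nP] := classic (exists a, bad P a).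
  exists (maxn N a.+1) => Q; rewrite inE => /orP [/eqP -> t Pt|HQ t Qt].
    by rewrite (HP _ _ Pt Pa) leq_max ltnSn orbT.
  by rewrite leq_max (HN Q HQ t Qt).
exists N => Q; rewrite inE => /orP [/eqP -> t Pt|HQ t Qt]; last exact: HN Qt.
by case: nP; exists t.
Qed.

Section Avoid.
Variable (R : numFieldType).

Lemma submxB m1 m2 n (A B : 'M[R]_(m1, n)) (C : 'M[R]_(m2, n)) :
  (A <= C)%MS -> (B <= C)%MS -> ((A - B)%R <= C)%MS.
Proof.
by move=> hA hB; apply: addmx_sub => //; rewrite -scaleN1r; apply: scalemx_sub.
Qed.

Lemma avoid m0 m n (W : 'M[R]_(m0, n)) (Ms : seq 'M[R]_(m, n)) :
  (forall M, M \in Ms -> ~~ (W <= M)%MS) ->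
  exists v : 'rV[R]_n, (v <= W)%MS /\ forall M, M \in Ms -> ~~ (v <= M)%MS.
Proof.
elim: Ms => [|M Ms IH] H; first by exists 0; rewrite sub0mx.
have [|v [vW vMs]] := IH; first by move=> M' HM'; apply: H; rewrite inE HM' orbT.
have [vM|vM] := boolP (v <= M)%MS; last first.
  by exists v; split => // M'; rewrite inE => /orP [/eqP ->|]; [|apply: vMs].
have /row_subPn [i wM] := H M (mem_head _ _).
set w := row i W in wM.
pose bad (M' : 'M[R]_(m, n)) (t : nat) := ((v + (t.+1)%:R *: w)%R <= M')%MS.
have [N HN] : exists N, forall P, P \in Ms -> forall t, bad P t -> (t < N)%N.
  apply: nat_avoid => M' HM' a b ha hb.
  apply/eqP; apply/negPn/negP => nab.
  have := submxB ha hb; rewrite [v + _]addrC addrKA -scalerBl => hw.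
  have nz : (a.+1)%:R - (b.+1)%:R != 0 :> R.
    by rewrite subr_eq0 eqr_nat eqSS.
  have hw' : (w <= M')%MS.
    by have := scalemx_sub ((a.+1%:R - b.+1%:R)^-1) hw; rewrite scalerA mulVf // scale1r.
  by move: (vMs _ HM'); rewrite -(addrK ((a.+1)%:R *: w) v) submxB // scalemx_sub.
exists (v + (N.+1)%:R *: w); split.
  by apply: addmx_sub => //; apply: scalemx_sub; apply: row_sub.
move=> M'; rewrite inE => /orP [/eqP ->|HM'].
  apply/negP => h; move: wM; apply/negP; rewrite negbK.
  have h2 := submxB h vM; rewrite [v + _]addrC addrK in h2.
  have := scalemx_sub ((N.+1)%:R^-1) h2.
  by rewrite scalerA mulVf ?pnatr_eq0 // scale1r.
apply/negP => h.
have := HN _ HM' N h.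
by rewrite ltnn.
Qed.

Lemma colv n m (M : 'M[R]_(m, n)) (v : 'rV[R]_n) : ~~ (v <= M)%MS ->
  exists c : 'cV[R]_n, M *m c = 0 /\ v *m c = 1%:M.
Proof.
rewrite submxE => /eqP nz.
have [j hj] : exists j, (v *m cokermx M) 0 j != 0.
  case: (pickP (fun j => (v *m cokermx M) 0 j != 0)) => [j hj|h]; first by exists j.
  exfalso.
  apply: nz.
  apply/matrixP => a b.
  rewrite ord1 [RHS]mxE.
  by move: (h b) => /= /negbFE /eqP.
exists (cokermx M *m (((v *m cokermx M) 0 j)^-1 *: delta_mx j 0)).
split; first by rewrite mulmxA mulmx_coker mul0mx.
rewrite mulmxA -scalemxAr -colE; set w := v *m cokermx M.
apply/matrixP => a b; rewrite !ord1 !mxE mulVf ?eqxx //; by move: hj; rewrite !mxE.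
Qed.
End Avoid.

Section Char.
Variables (R : realType) (d : nat) (V : finType) (Th : hypergraph V) (p : config R d V).

Lemma rowDm (S : {set V}) i : row i (Dm (xp p) S) =
  let: (u, v) := enum_val i in if (u \in S) && (v \in S) then p u - p v else 0.
Proof.
apply/rowP => k; rewrite !mxE; case: (enum_val i) => u v.
by case: ifP => _; rewrite !mxE.
Qed.

Lemma rowDm_pair (S : {set V}) u v : u \in S -> v \in S ->
  row (enum_rank (u, v)) (Dm (xp p) S) = p u - p v.
Proof. by move=> hu hv; rewrite rowDm enum_rankK hu hv. Qed.

Definition Good (S : {set V}) (B : 'M[R]_d) :=
  exists G, G \in unitmx /\ exists b, forall u, u \in S -> p u *m G + b = p u *m B.
Definition Cgood := forall B, (forall h, h \in Th -> Good h B) -> Good setT B.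

Lemma G1 (S : {set V}) (B G : 'M[R]_d) (b : 'rV[R]_d) : (forall u, u \in S -> p u *m G + b = p u *m B) ->
  Dm (xp p) S *m G = Dm (xp p) S *m B.
Proof.
move=> H; apply/row_matrixP => i; rewrite !row_mul rowDm.
case: (enum_val i) => u v; case: ifP => [/andP [hu hv]|_]; last by rewrite !mul0mx.
rewrite !mulmxBl -(H u hu) -(H v hv).
by rewrite opprD addrACA subrr addr0.
Qed.

Lemma G2 (S : {set V}) (B G : 'M[R]_d) : G \in unitmx -> Dm (xp p) S *m G = Dm (xp p) S *m B -> Good S B.
Proof.
move=> uG e; exists G; split => //.
have [[u0 hu0]|] := classic (exists u0, u0 \in S); last first.
  by move=> nS; exists 0 => u hu; case: nS; exists u.
exists (p u0 *m B - p u0 *m G) => u hu.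
have := congr1 (row (enum_rank (u, u0))) e.
rewrite !row_mul rowDm_pair // !mulmxBl => e2.
by rewrite -(subrK (p u0 *m B) (p u *m B)) -e2 -addrA (addrC (- _)).
Qed.

Lemma Cm_Cgood : Cm Th (xp p) -> Cgood.
Proof.
move=> /orP [/eqP D0|/existsP [h /andP [hTh sub]]] B HB.
  by apply: (G2 (G := 1%:M)); [exact: unitmx1| rewrite D0 !mul0mx].
have [G [uG [b Hb]]] := HB h hTh.
have e := G1 Hb; apply: (G2 (G := G)) => //.
by have [W ->] := submxP sub; rewrite -!mulmxA e.
Qed.

Lemma Cgood_Cm : Cgood -> Cm Th (xp p).
Proof.
move=> HC; apply/negPn/negP; rewrite negb_or => /andP [nz /existsPn nh].
set W := Dm (xp p) setT in nz nh.
have [|v [vW vav]] := avoid (W := W) (Ms := 0 :: [seq Dm (xp p) h | h <- enum Th]).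
  move=> M; rewrite inE => /orP [/eqP ->|/mapP [h hh ->]].
    by apply/negP => /submx0null; apply/eqP.
  by rewrite mem_enum in hh; have := nh h; rewrite hh.
have v0 : ~~ (v <= (0 : 'M[R]_(#|{: V * V}|, d)))%MS := vav _ (mem_head _ _).
have [c0 [_ vc0]] := colv v0.
pose B := 1%:M - c0 *m v.
have vB : v *m B = 0 by rewrite mulmxBr mulmx1 mulmxA vc0 mul1mx subrr.
have [G [uG [b Hb]]] : Good setT B.
  apply: HC => h hh.
  have vh : ~~ (v <= Dm (xp p) h)%MS.
    by apply: vav; rewrite inE; apply/orP; right; apply/mapP; exists h; rewrite ?mem_enum.
  have [ch [Mch vch]] := colv vh.
  pose N := (ch - c0) *m v.
  have NN : N *m N = 0.
    by rewrite /N mulmxA -(mulmxA _ v) mulmxBr vch vc0 subrr mulmx0 mul0mx.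
  apply: (G2 (G := B + ch *m v)).
    have EN : B + ch *m v = 1%:M + N by rewrite /B /N mulmxBl addrAC addrA.
    have [] := mulmx1_unit (A := B + ch *m v) (B := 1%:M - N) => //.
    by rewrite EN mulmxBr mulmx1 mulmxDl mul1mx NN addr0 addrK.
  by rewrite mulmxDr mulmxA Mch mul0mx addr0.
have e := G1 Hb.
have [w vw] := submxP vW.
have vG : v *m G = 0 by rewrite vw -mulmxA e mulmxA -vw vB.
have : v = 0 by rewrite -(mulmxK uG v) vG mul0mx.
by move=> ev; move: v0; rewrite ev sub0mx.
Qed.
End Char.

Section Char2.
Variables (R : realType) (d : nat) (V : finType) (Th : hypergraph V) (p : config R d V).

Lemma rvB n (a b : 'rV[R]_n) i : (a - b) 0 i = a 0 i - b 0 i.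
Proof. by rewrite !mxE. Qed.
Lemma rvD n (a b : 'rV[R]_n) i : (a + b) 0 i = a 0 i + b 0 i.
Proof. by rewrite !mxE. Qed.

Definition Aff (S : {set V}) (q : config R d V) :=
  exists (A : 'M[R]_d) (b : 'rV[R]_d), forall u, u \in S -> q u = p u *m A + b.
Definition colq (q : config R d V) (k : 'I_d) : 'rV[R]_#|V| :=
  \row_i q (enum_val i) 0 k.

Lemma PTmul (y : 'rV[R]_(1 + d)) i :
  (y *m PT (xp p)) 0 i = y 0 (lshift d 0) + \sum_j y 0 (rshift 1 j) * p (enum_val i) 0 j.
Proof.
rewrite -{1}[y]hsubmxK /PT mul_row_col mxE; congr (_ + _).
  by rewrite mxE big_ord1 !mxE mulr1.
by rewrite mxE; apply: eq_bigr => j _; rewrite !mxE.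
Qed.

Lemma affrow (A : 'M[R]_d) (b : 'rV[R]_d) u k :
  (p u *m A + b) 0 k = b 0 k + \sum_j A j k * p u 0 j.
Proof. by rewrite !mxE addrC; congr (_ + _); apply: eq_bigr => j _; rewrite mulrC. Qed.

Lemma Dg_entry (S : {set V}) (w : 'rV[R]_#|V|) i :
  (w *m Dg R S) 0 i = if enum_val i \in S then w 0 i else 0.
Proof. by rewrite /Dg mul_mx_diag !mxE; case: ifP; rewrite ?mulr1 ?mulr0. Qed.

Lemma Aff_col (S : {set V}) q :
  Aff S q <-> forall k, (colq q k <= Kh (xp p) S)%MS.
Proof.
split.
  move=> [A [b H]] k.
  pose y : 'rV[R]_(1 + d) := row_mx (b 0 k)%:M (\row_j A j k).
  have yP i : (y *m PT (xp p)) 0 i = (p (enum_val i) *m A + b) 0 k.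
    rewrite PTmul affrow /y (row_mxEl ((b 0 k)%:M)) mxE eqxx mulr1n.
    by congr (_ + _); apply: eq_bigr => j _; rewrite (row_mxEr ((b 0 k)%:M)) mxE.
  have E0 : (colq q k - y *m PT (xp p)) *m Dg R S = 0.
    apply/rowP => i; rewrite Dg_entry [RHS]mxE; case: ifP => // hi.
    by rewrite rvB yP mxE (H _ hi) subrr.
  have -> : colq q k = row_mx y (colq q k - y *m PT (xp p)) *m Kh (xp p) S.
    by rewrite /Kh mul_row_col mulmxBr mulmx1 E0 subr0 addrC subrK.
  exact: submxMl.
move=> H.
pose W k := colq q k *m pinvmx (Kh (xp p) S).
have EW k : colq q k = lsubmx (W k) *m PT (xp p) + rsubmx (W k) *m (1%:M - Dg R S).
  by rewrite -mul_row_col hsubmxK /W mulmxKpV.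
exists (\matrix_(j, k) lsubmx (W k) 0 (rshift 1 j)).
exists (\row_k lsubmx (W k) 0 (lshift d 0)).
move=> u hu; apply/rowP => k.
have := congr1 (fun M : 'rV[R]_#|V| => M 0 (enum_rank u)) (EW k).
rewrite mxE enum_rankK => ->.
rewrite rvD mulmxBr mulmx1 rvB Dg_entry enum_rankK hu subrr addr0.
rewrite PTmul affrow enum_rankK; congr (_ + _); first by rewrite [RHS]mxE.
by apply: eq_bigr => j _; rewrite [in RHS]mxE.
Qed.

Definition LA := forall q, (forall h, h \in Th -> Aff h q) -> Aff setT q.

Lemma KhT : (Kh (xp p) setT :=: PT (xp p))%MS.
Proof.
have E: Dg R [set: V] = 1%:M :> 'M[R]_#|V|.
  by apply/matrixP => i j; rewrite !mxE in_setT.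
rewrite /Kh E subrr; apply: eqmx_trans (eqmx_sym (addsmxE _ _)) _.
exact: addsmx0.
Qed.

Lemma LA_LAm : (0 < d)%N -> LA <-> LAm Th (xp p).
Proof.
move=> d0; split => [HLA|HL q Hq].
  apply/row_subP => i.
  set c := row i (\bigcap_(h in Th) <<Kh (xp p) h>>)%MS.
  have hc : forall h, h \in Th -> (c <= Kh (xp p) h)%MS.
    move=> h hh; have := row_sub i (\bigcap_(h in Th) <<Kh (xp p) h>>)%MS.
    by move/sub_bigcapmxP => /(_ h hh); rewrite genmxE.
  pose q : config R d V := fun u => const_mx (c 0 (enum_rank u)).
  have cq k : colq q k = c by apply/rowP => j; rewrite !mxE enum_valK.
  have : Aff setT q.
    apply: HLA => h hh; apply/Aff_col => k; rewrite cq; exact: hc.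
  by move/Aff_col => /(_ (Ordinal d0)); rewrite cq KhT.
apply/Aff_col => k; rewrite KhT; apply: submx_trans HL.
apply/sub_bigcapmxP => h hh; rewrite genmxE.
by have /Aff_col := Hq h hh; apply.
Qed.
End Char2.

Lemma det_eval (R : realType) n (M : 'M[R]_n) (t : R) :
  (\det (1%:M + 'X *: map_mx polyC M)).[t] = \det (1%:M + t *: M).
Proof.
rewrite -horner_evalE -det_map_mx; congr (\det _).
by apply/matrixP => i j; rewrite !mxE rmorphD rmorphM rmorph_nat /= !horner_evalE hornerX hornerC.
Qed.

Lemma exists_t (R : realType) (I : finType) n (A : I -> 'M[R]_n) :
  exists t : R, t != 0 /\ forall i, (1%:M + t *: A i) \in unitmx.
Proof.
pose Q := \prod_(i : I) \det (1%:M + 'X *: map_mx polyC (A i)).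
have QE t : Q.[t] = \prod_(i : I) \det (1%:M + t *: A i).
  rewrite -horner_evalE rmorph_prod; apply: eq_bigr => i _.
  exact: det_eval.
have Q0 : Q != 0.
  apply/negP => /eqP Q0; have := QE 0; rewrite Q0 horner0.
  under eq_bigr do rewrite scale0r addr0 det1.
  by rewrite big1_eq => /eqP; rewrite eq_sym oner_eq0.
pose rs := [seq (i.+1)%:R : R | i <- iota 0 (size Q)].
have urs : uniq rs.
  rewrite map_inj_uniq ?iota_uniq // => a b /eqP; rewrite eqr_nat eqSS => /eqP.
  by [].
have : ~~ all (root Q) rs.
  apply/negP => hall; have := max_poly_roots Q0 hall urs.
  by rewrite size_map size_iota ltnn.
case/allPn => x /mapP [i _ ->] nr.
exists (i.+1)%:R; split; first by rewrite pnatr_eq0.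
move: nr; rewrite /root QE prodf_seq_neq0 => /allP H j.
by rewrite unitmxE unitfE; apply: H; rewrite mem_index_enum.
Qed.

Section Rig.
Variables (R : realType) (d : nat) (V : finType) (Th : hypergraph V) (p : config R d V).

Lemma rigid_Cgood : affinely_rigid Th p -> Cgood Th p.
Proof.
move=> Hr B HB.
have [|g [[G [b [uG Hg]]] Hgq]] := Hr (fun u => p u *m B).
  move=> h hh; have [G [uG [b Hb]]] := HB h hh.
  exists (fun x => x *m G + b); split; first by exists G, b.
  exact: Hb.
by exists G; split => //; exists b => u _; rewrite -Hg Hgq.
Qed.

Lemma rigid_LA : affinely_rigid Th p -> LA Th p.
Proof.
move=> Hr q Hq.
have [f Hf] : exists f : {set V} -> 'M[R]_d * 'rV[R]_d, forall h, h \in Th ->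
    forall u, u \in h -> q u = p u *m (f h).1 + (f h).2.
  apply: (@fin_all_exists _ (fun _ => ('M[R]_d * 'rV[R]_d)%type)
    (fun h Ab => h \in Th -> forall u, u \in h -> q u = p u *m Ab.1 + Ab.2)) => h.
  case: (boolP (h \in Th)) => hh; last by exists (0, 0).
  by have [A [b H]] := Hq h hh; exists (A, b).
have [t [t0 ut]] := exists_t (fun h => (f h).1).
have [|g [[G [c [uG Hg]]] Hgq]] := Hr (fun u => p u + t *: q u).
  move=> h hh; exists (fun x => x *m (1%:M + t *: (f h).1) + t *: (f h).2); split.
    by exists (1%:M + t *: (f h).1), (t *: (f h).2); split.
  move=> u hu; rewrite (Hf h hh u hu) mulmxDr mulmx1 -scalemxAr scalerDr addrA.
  by [].
exists (t^-1 *: (G - 1%:M)), (t^-1 *: c) => u _.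
have := Hgq u; rewrite Hg => e.
have e' : p u *m G - p u + c = t *: q u.
  by rewrite addrAC e addrAC subrr add0r.
by rewrite -scalemxAr mulmxBr mulmx1 -scalerDr e' scalerA mulVf // scale1r.
Qed.

Lemma LA_Cgood_rigid : LA Th p -> Cgood Th p -> affinely_rigid Th p.
Proof.
move=> HLA HC q Hq.
have [A0 [b0 H0]] : Aff p setT q.
  apply: HLA => h hh; have [g [[G [b [uG Hg]]] Hgq]] := Hq h hh.
  by exists G, b => u hu; rewrite -Hgq // Hg.
have [|G [uG [b Hb]]] := HC A0.
  move=> h hh; have [g [[G [b [uG Hg]]] Hgq]] := Hq h hh.
  exists G; split => //; exists (b - b0) => u hu.
  by rewrite addrA -Hg Hgq // H0 ?in_setT // addrK.
exists (fun x => x *m G + (b + b0)); split; first by exists G, (b + b0).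
by move=> u; rewrite addrA Hb ?in_setT // H0 ?in_setT.
Qed.
End Rig.

Lemma rigid_Psi (R : realType) (d : nat) (V : finType) (Th : hypergraph V)
  (p : config R d V) : (0 < d)%N -> affinely_rigid Th p <-> Psi Th (xp p).
Proof.
move=> d0; split.
  move=> Hr; apply/andP; split.
    by apply/(LA_LAm Th p d0); apply: rigid_LA.
  by apply: Cgood_Cm; apply: rigid_Cgood.
move/andP => [hL hC]; apply: LA_Cgood_rigid.
  by apply/(LA_LAm Th p d0).
exact: Cm_Cgood.
Qed.

Theorem corollary3p9 (R : realType) (d : nat) (V : finType) (Th : hypergraph V) :
  (forall p : config R d V, generic p -> affinely_rigid Th p) \/
  (forall p : config R d V, generic p -> ~ affinely_rigid Th p).
Proof.
case: (posnP d) => [d0|d0].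
  left => p _ q _; exists id; split.
    by exists 1%:M, 0; split; [exact: unitmx1| move=> x; rewrite mulmx1 addr0].
  by move=> u; apply/matrixP => i j; have := ltn_ord j; rewrite {2}d0.
have [[p0 [g0 r0]]|nex] := classic (exists p0 : config R d V, generic p0 /\ affinely_rigid Th p0).
  left => p gp; apply/(rigid_Psi Th p d0).
  by rewrite (Psi_generic Th gp) -(Psi_generic Th g0); apply/(rigid_Psi Th p0 d0).
by right => p gp rp; apply: nex; exists p.
Qed.
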